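(* Let $X$ be a set with at least two elements. Then $\mathcal{PI}^{\ast}_X$ and $\overline{\mathcal{PI}^{\ast}}_X$ are fundamental.
   Context: Let $X'=\{x':x\in X\}$ be a disjoint copy of $X$. Let $P_X$ be the set of all partitions of $X\cup X'$ each of whose blocks is either a singleton (a point) or a generalised line (a subset meeting both $X$ and $X'$). Product $\star$: with $X''$ a third copy of $X$, regard $\alpha$ as a partition of $X\cup X''$ and $\beta$ as a partition of $X''\cup X'$, let $\sim$ be the equivalence on $X\cup X''\cup X'$ generated by the blocks of both; $\alpha\star\beta$ is the partition of $X\cup X'$ in which distinct $u,v$ are in one block iff $u\sim v$ and the $\sim$-class of $u$ contains no singleton block of $\alpha$ or $\beta$. Product $\circ$: $\alpha\circ\beta$ has as generalised lines exactly the sets $A\cup D'$ with $A\cup B'$ a generalised line of $\alpha$ and $B\cup D'$ a generalised line of $\beta$ (same $B\subseteq X$), all other elements points. $\mathcal{PI}^{\ast}_X=(P_X,\star)$ and $\overline{\mathcal{PI}^{\ast}}_X=(P_X,\circ)$ are inverse semigroups. An inverse semigroup $S$ is fundamental if the relation $\mu=\{(a,b)\in S\times S: a^{-1}ea=b^{-1}eb \text{ for all idempotents } e\in S\}$ is the identity relation. *)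

(* Defs.v *)
From Stdlib Require Import Relations Relation_Operators.

Set Implicit Arguments.

(** Points of X ∪ X': [inl x] is x ∈ X, [inr x] is x' ∈ X'.
    A partition of X ∪ X' is represented by its equivalence relation
    ("u and v lie in the same block"). *)
Definition pt (X : Type) := (X + X)%type.
Definition prel (X : Type) := pt X -> pt X -> Prop.

Definition singleton_block (X : Type) (a : prel X) (u : pt X) : Prop :=
  forall v, a u v -> v = u.

Definition line_block (X : Type) (a : prel X) (u : pt X) : Prop :=
  (exists x, a u (inl x)) /\ (exists x, a u (inr x)).

Definition in_PX (X : Type) (a : prel X) : Prop :=
  equivalence (pt X) a /\
  forall u, singleton_block a u \/ line_block a u.

(** Three copies X, X'', X' used for the product ⋆ *)
Inductive pt3 (X : Type) : Type :=
| Lft : X -> pt3 X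
| Mid : X -> pt3 X
| Rgt : X -> pt3 X.

(** alpha viewed on X ∪ X'' , beta viewed on X'' ∪ X' *)
Definition emb_a (X : Type) (u : pt X) : pt3 X :=
  match u with inl x => Lft x | inr x => Mid x end.
Definition emb_b (X : Type) (u : pt X) : pt3 X :=
  match u with inl x => Mid x | inr x => Rgt x end.
Definition emb_out (X : Type) (u : pt X) : pt3 X :=
  match u with inl x => Lft x | inr x => Rgt x end.

Definition gen_rel (X : Type) (a b : prel X) : pt3 X -> pt3 X -> Prop :=
  fun p q =>
    (exists u v, a u v /\ p = emb_a u /\ q = emb_a v) \/
    (exists u v, b u v /\ p = emb_b u /\ q = emb_b v).

Definition sim (X : Type) (a b : prel X) : pt3 X -> pt3 X -> Prop :=
  clos_refl_sym_trans (pt3 X) (gen_rel a b).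

Definition class_has_point (X : Type) (a b : prel X) (p : pt3 X) : Prop :=
  exists w : pt X,
    (singleton_block a w /\ sim a b (emb_a w) p) \/
    (singleton_block b w /\ sim a b (emb_b w) p).

Definition star (X : Type) (a b : prel X) : prel X :=
  fun u v =>
    u = v \/
    (sim a b (emb_out u) (emb_out v) /\ ~ class_has_point a b (emb_out u)).

(** The product ∘ : the generalised lines of a∘b are the sets A ∪ D' where
    A ∪ B' is a generalised line of a and B ∪ D' a generalised line of b
    (same B).  Such a pair of lines is determined by any b0 ∈ B: the
    a-block of (b0)' and the b-block of b0, required to be lines with
    equal B-parts. *)
Definition circ (X : Type) (a b : prel X) : prel X :=
  fun u v =>
    u = v \/
    exists b0 : X,
      line_block a (inr b0) /\ line_block b (inl b0) /\
      (forall x, a (inr b0) (inr x) <-> b (inl b0) (inl x)) /\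
      let inAD := fun w : pt X =>
        match w with
        | inl x => a (inr b0) (inl x)
        | inr x => b (inl b0) (inr x)
        end in
      inAD u /\ inAD v.

(** Semigroup notions, for a semigroup (S, op) with carrier given by a
    predicate P on an ambient type T. *)
Definition idempotent_in (T : Type) (P : T -> Prop) (op : T -> T -> T) (e : T) :=
  P e /\ op e e = e.

Definition inverse_in (T : Type) (P : T -> Prop) (op : T -> T -> T) (a a' : T) :=
  P a' /\ op (op a a') a = a /\ op (op a' a) a' = a'.

Definition mu_rel (T : Type) (P : T -> Prop) (op : T -> T -> T) (a b : T) :=
  forall e, idempotent_in P op e ->
  forall a' b', inverse_in P op a a' -> inverse_in P op b b' ->
    op (op a' e) a = op (op b' e) b.

Definition fundamental (T : Type) (P : T -> Prop) (op : T -> T -> T) :=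
  forall a b, P a -> P b -> mu_rel P op a b -> a = b.

(* Main.v *)
Require Import Defs.
From Stdlib Require Import Relations Relation_Operators Classical FunctionalExtensionality PropExtensionality.

Definition swp {X : Type} (u : pt X) : pt X := match u with inl x => inr x | inr x => inl x end.
Definition base {X : Type} (u : pt X) : X := match u with inl x => x | inr x => x end.
Definition tr {X : Type} (a : prel X) : prel X := fun u v => a (swp u) (swp v).
Definition eP {X : Type} (A : X -> Prop) : prel X := fun u v => u = v \/ (A (base u) /\ A (base v)).

Lemma pr {X : Type} {a : prel X} : in_PX a -> forall u, a u u.
Proof. intros [[R T S] _]; exact R. Qed.
Lemma ps {X : Type} {a : prel X} : in_PX a -> forall u v, a u v -> a v u.
Proof. intros [[R T S] _]; exact S. Qed.
Lemma pt_ {X : Type} {a : prel X} : in_PX a -> forall u v w, a u v -> a v w -> a u w.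
Proof. intros [[R T S] _]; exact T. Qed.

Ltac eqv Ha := let R := fresh "R" in let S := fresh "S" in let T := fresh "T" in
  pose proof (pr Ha) as R; pose proof (ps Ha) as S; pose proof (pt_ Ha) as T; eauto 7.

Lemma crst_inv {T : Type} (R : T -> T -> Prop) (S : T -> Prop) :
  (forall p q, R p q -> (S p <-> S q)) -> forall p q, clos_refl_sym_trans T R p q -> (S p <-> S q).
Proof. intros H p q Hc; induction Hc; firstorder. Qed.

Lemma gen_inv {X : Type} (a b : prel X) (S : pt3 X -> Prop) :
  (forall u v, a u v -> (S (emb_a u) <-> S (emb_a v))) ->
  (forall u v, b u v -> (S (emb_b u) <-> S (emb_b v))) ->
  forall p q, sim a b p q -> (S p <-> S q).
Proof. intros Ha Hb. apply crst_inv. intros p q [(u&v&H&->&->)|(u&v&H&->&->)]; eauto. Qed.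

Lemma no_point {X : Type} (a b : prel X) (S : pt3 X -> Prop) p0 :
  (forall u v, a u v -> (S (emb_a u) <-> S (emb_a v))) ->
  (forall u v, b u v -> (S (emb_b u) <-> S (emb_b v))) ->
  (forall w, S (emb_a w) -> exists v, a w v /\ v <> w) ->
  (forall w, S (emb_b w) -> exists v, b w v /\ v <> w) ->
  S p0 -> ~ class_has_point a b p0.
Proof.
  intros Ha Hb Na Nb H0 [w [[Hs Hsim]|[Hs Hsim]]];
  pose proof (gen_inv a b S Ha Hb _ _ Hsim) as E.
  - destruct (Na w) as [v [Hv Hne]]; [tauto|]. apply Hne, Hs, Hv.
  - destruct (Nb w) as [v [Hv Hne]]; [tauto|]. apply Hne, Hs, Hv.
Qed.

Lemma sim_a {X : Type} (a b : prel X) u v : a u v -> sim a b (emb_a u) (emb_a v).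
Proof. intro H. apply rst_step. left. exists u, v. auto. Qed.
Lemma sim_b {X : Type} (a b : prel X) u v : b u v -> sim a b (emb_b u) (emb_b v).
Proof. intro H. apply rst_step. right. exists u, v. auto. Qed.
Lemma sim_sym {X : Type} (a b : prel X) p q : sim a b p q -> sim a b q p.
Proof. apply rst_sym. Qed.
Lemma sim_trans {X : Type} (a b : prel X) p q r : sim a b p q -> sim a b q r -> sim a b p r.
Proof. apply rst_trans. Qed.

Lemma line_of {X : Type} {a : prel X} {u v} : in_PX a -> a u v -> u <> v -> line_block a u.
Proof.
  intros Ha H Hne. destruct (proj2 Ha u) as [Hs|Hl]; auto.
  exfalso; apply Hne; symmetry; apply Hs; auto.
Qed.

Lemma prel_ext {X : Type} (a b : prel X) : (forall u v, a u v <-> b u v) -> a = b.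
Proof.
  intro H. extensionality u; extensionality v. apply propositional_extensionality; auto.
Qed.

Definition Sa {X : Type} (a : prel X) (u : pt X) (p : pt3 X) : Prop :=
  match p with Lft x => a u (inl x) | Mid y => a u (inl y) | Rgt w => a u (inr w) end.

Lemma starG {X : Type} (a d : prel X) : in_PX a ->
  (forall u v, d u v -> u = v \/ a (inl (base u)) (inl (base v))) ->
  (forall x0 w0 u v, a (inl x0) (inr w0) -> a (inl x0) (inl (base u)) ->
      a (inl x0) (inl (base v)) -> d u v) ->
  star d a = a.
Proof.
  intros Ha H1 H2.
  assert (InvD : forall u u1 v1, d u1 v1 -> (Sa a u (emb_a u1) <-> Sa a u (emb_a v1))).
  { intros u u1 v1 H. destruct (H1 _ _ H) as [<-|H'].
    - tauto.
    - destruct u1, v1; simpl in *; split; intro; eqv Ha. }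
  assert (InvA : forall u u1 v1, a u1 v1 -> (Sa a u (emb_b u1) <-> Sa a u (emb_b v1))).
  { intros u u1 v1 H. destruct u1, v1; simpl in *; split; intro; eqv Ha. }
  assert (Out : forall u w, Sa a u (emb_out w) <-> a u w).
  { intros u [w|w]; simpl; tauto. }
  apply prel_ext. intros u v. split.
  - intros [<-|[Hs _]]. apply (pr Ha).
    pose proof (gen_inv d a (Sa a u) (InvD u) (InvA u) _ _ Hs) as E.
    rewrite !Out in E. apply E, (pr Ha).
  - intro H. destruct (classic (u = v)) as [<-|Hne]; [left; reflexivity|right].
    destruct (line_of Ha H Hne) as [[x0 Hx0] [w0 Hw0]].
    assert (Hxw : a (inl x0) (inr w0)) by eqv Ha.
    assert (conn : forall p, a u p -> sim d a (emb_out p) (Mid x0)).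
    { intros [x|w] Hp.
      - change (sim d a (emb_a (inl x)) (emb_a (inr x0))). apply sim_a.
        apply (H2 x0 w0); simpl; eqv Ha.
      - change (sim d a (emb_b (inr w)) (emb_b (inl x0))). apply sim_b. eqv Ha. }
    split.
    + apply sim_trans with (Mid x0); [apply conn; apply (pr Ha)|apply sim_sym, conn, H].
    + apply (no_point d a (Sa a u) _ (InvD u) (InvA u)).
      * intros [x|y] Hs; simpl in Hs.
        -- exists (inr x0). split; [|discriminate]. apply (H2 x0 w0); simpl; eqv Ha.
        -- exists (inl y). split; [|discriminate]. apply (H2 x0 w0); simpl; eqv Ha.
      * intros [y|w] Hs; simpl in Hs.
        -- exists (inr w0). split; [eqv Ha|discriminate].
        -- exists (inl x0). split; [eqv Ha|discriminate].
      * apply Out, (pr Ha).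
Qed.

Lemma tr_PX {X : Type} (a : prel X) : in_PX a -> in_PX (tr a).
Proof.
  intros Ha. split.
  - split.
    + intro u. apply (pr Ha).
    + intros u v w H1 H2. exact (pt_ Ha _ _ _ H1 H2).
    + intros u v H. exact (ps Ha _ _ H).
  - intro u. destruct (proj2 Ha (swp u)) as [Hs|[[x Hx] [y Hy]]].
    + left. intros v Hv. specialize (Hs _ Hv). destruct u, v; simpl in Hs; congruence.
    + right. split; [exists y|exists x]; auto.
Qed.

Lemma trtr {X : Type} (a : prel X) : tr (tr a) = a.
Proof. apply prel_ext. intros [u|u] [v|v]; unfold tr; simpl; tauto. Qed.

Definition S0 {X : Type} (a : prel X) (x0 : X) (p : pt3 X) : Prop :=
  match p with Lft x => a (inl x0) (inl x) | Mid y => a (inl x0) (inr y) | Rgt x => a (inl x0) (inl x) end.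

Lemma starD {X : Type} (a : prel X) : in_PX a ->
  (forall u v, star a (tr a) u v -> u = v \/ a (inl (base u)) (inl (base v))) /\
  (forall x0 w0 u v, a (inl x0) (inr w0) -> a (inl x0) (inl (base u)) ->
      a (inl x0) (inl (base v)) -> star a (tr a) u v).
Proof.
  intros Ha.
  assert (InvA : forall x0 u1 v1, a u1 v1 -> (S0 a x0 (emb_a u1) <-> S0 a x0 (emb_a v1))).
  { intros x0 u1 v1 H. destruct u1, v1; simpl in *; split; intro; eqv Ha. }
  assert (InvT : forall x0 u1 v1, tr a u1 v1 -> (S0 a x0 (emb_b u1) <-> S0 a x0 (emb_b v1))).
  { intros x0 u1 v1 H. unfold tr in H. destruct u1, v1; simpl in *; split; intro; eqv Ha. }
  assert (Out : forall x0 w, S0 a x0 (emb_out w) <-> a (inl x0) (inl (base w))).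
  { intros x0 [w|w]; simpl; tauto. }
  split.
  - intros u v [<-|[Hs _]]; [left; reflexivity|right].
    pose proof (gen_inv a (tr a) (S0 a (base u)) (InvA _) (InvT _) _ _ Hs) as E.
    rewrite !Out in E. apply E, (pr Ha).
  - intros x0 w0 u v Hxw Hu Hv. right.
    assert (conn : forall p, a (inl x0) (inl (base p)) -> sim a (tr a) (emb_out p) (Mid w0)).
    { intros [x|x] Hp; simpl in Hp.
      - change (sim a (tr a) (emb_a (inl x)) (emb_a (inr w0))). apply sim_a. eqv Ha.
      - change (sim a (tr a) (emb_b (inr x)) (emb_b (inl w0))). apply sim_b.
        unfold tr; simpl. eqv Ha. }
    split.
    + apply sim_trans with (Mid w0); [apply conn, Hu|apply sim_sym, conn, Hv].
    + apply (no_point a (tr a) (S0 a x0) _ (InvA _) (InvT _)).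
      * intros [x|y] Hs; simpl in Hs.
        -- exists (inr w0). split; [eqv Ha|discriminate].
        -- exists (inl x0). split; [eqv Ha|discriminate].
      * intros [y|x] Hs; simpl in Hs.
        -- exists (inr x0). split; [unfold tr; simpl; eqv Ha|discriminate].
        -- exists (inl w0). split; [unfold tr; simpl; eqv Ha|discriminate].
      * apply Out, Hu.
Qed.

Lemma star_inv {X : Type} (a : prel X) : in_PX a -> inverse_in (@in_PX X) (@star X) a (tr a).
Proof.
  intro Ha. pose proof (tr_PX a Ha) as Ht.
  split; [exact Ht|split].
  - destruct (starD a Ha) as [D1 D2]. apply starG; auto.
  - destruct (starD (tr a) Ht) as [D1 D2]. rewrite trtr in D1, D2. apply starG; auto.
Qed.

Lemma eP_PX {X : Type} (A : X -> Prop) : in_PX (eP A).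
Proof.
  split.
  - split.
    + intro u. left; reflexivity.
    + intros u v w [<-|[H1 H2]] [<-|[H3 H4]]; unfold eP; auto.
    + intros u v [<-|[H1 H2]]; unfold eP; auto.
  - intro u. destruct (classic (A (base u))) as [HA|HA].
    + right. split; [exists (base u)|exists (base u)]; right; auto.
    + left. intros v [<-|[H1 H2]]; [reflexivity|contradiction].
Qed.

Lemma star_idem {X : Type} (A : X -> Prop) : idempotent_in (@in_PX X) (@star X) (eP A).
Proof.
  split; [apply eP_PX|]. apply starG; [apply eP_PX| |].
  - intros u v [<-|[H1 H2]]; [left; reflexivity|right; right; auto].
  - intros x0 w0 u v [H|[H1 H2]] [H3|[H4 H5]] [H6|[H7 H8]]; try discriminate;
    right; simpl in *; split; congruence.
Qed.

Definition S1 {X : Type} (a : prel X) (x : X) (p : pt3 X) : Prop :=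
  match p with Lft w => a (inl x) (inr w) | Mid y => a (inl x) (inl y) | Rgt y => a (inl x) (inl y) end.
Definition S2 {X : Type} (a : prel X) (x : X) (p : pt3 X) : Prop :=
  match p with Lft w => a (inl x) (inr w) | Mid y => a (inl x) (inl y) | Rgt w => a (inl x) (inr w) end.

Lemma star_i {X : Type} (a : prel X) x z : in_PX a -> a (inl x) (inr z) ->
  star (star (tr a) (eP (fun y => a (inl x) (inl y)))) a (inl z) (inr z).
Proof.
  intros Ha Hxz.
  set (A := fun y => a (inl x) (inl y)).
  set (c := star (tr a) (eP A)).
  set (T1 := fun u => a (inl x) (swp u)).
  assert (InvT : forall u1 v1, tr a u1 v1 -> (S1 a x (emb_a u1) <-> S1 a x (emb_a v1))).
  { intros u1 v1 H. unfold tr in H. destruct u1, v1; simpl in *; split; intro; eqv Ha. }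
  assert (InvE : forall u1 v1, eP A u1 v1 -> (S1 a x (emb_b u1) <-> S1 a x (emb_b v1))).
  { intros u1 v1 [<-|[H1 H2]]; [tauto|]. destruct u1, v1; simpl in *; unfold A in *; tauto. }
  assert (Out : forall w, S1 a x (emb_out w) <-> T1 w).
  { intros [w|w]; simpl; tauto. }
  assert (c_inv : forall u1 v1, c u1 v1 -> (T1 u1 <-> T1 v1)).
  { intros u1 v1 [<-|[Hs _]]; [tauto|].
    pose proof (gen_inv _ _ _ InvT InvE _ _ Hs) as E. rewrite !Out in E. exact E. }
  assert (c_pos : forall u1 v1, T1 u1 -> T1 v1 -> c u1 v1).
  { intros u1 v1 Hu Hv. right.
    assert (conn : forall p, T1 p -> sim (tr a) (eP A) (emb_out p) (Mid x)).
    { intros [w|y] Hp; unfold T1 in Hp; simpl in Hp.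
      - change (sim (tr a) (eP A) (emb_a (inl w)) (emb_a (inr x))). apply sim_a.
        unfold tr; simpl. eqv Ha.
      - change (sim (tr a) (eP A) (emb_b (inr y)) (emb_b (inl x))). apply sim_b.
        right. unfold A; simpl. split; eqv Ha. }
    split.
    + apply sim_trans with (Mid x); [apply conn, Hu|apply sim_sym, conn, Hv].
    + apply (no_point _ _ (S1 a x) _ InvT InvE).
      * intros [w|y] Hs; simpl in Hs.
        -- exists (inr x). split; [unfold tr; simpl; eqv Ha|discriminate].
        -- exists (inl z). split; [unfold tr; simpl; eqv Ha|discriminate].
      * intros [y|y] Hs; simpl in Hs.
        -- exists (inr y). split; [right; auto|discriminate].
        -- exists (inl y). split; [right; auto|discriminate].
      * apply Out, Hu. }
  assert (InvC : forall u1 v1, c u1 v1 -> (S2 a x (emb_a u1) <-> S2 a x (emb_a v1))).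
  { intros u1 v1 H. pose proof (c_inv _ _ H) as E. unfold T1 in E.
    destruct u1, v1; simpl in *; exact E. }
  assert (InvA : forall u1 v1, a u1 v1 -> (S2 a x (emb_b u1) <-> S2 a x (emb_b v1))).
  { intros u1 v1 H. destruct u1, v1; simpl in *; split; intro; eqv Ha. }
  right. split.
  - apply sim_trans with (Mid x).
    + change (sim c a (emb_a (inl z)) (emb_a (inr x))). apply sim_a.
      apply c_pos; unfold T1; simpl; eqv Ha.
    + change (sim c a (emb_b (inl x)) (emb_b (inr z))). apply sim_b. exact Hxz.
  - apply (no_point _ _ (S2 a x) _ InvC InvA).
    + intros [w|y] Hs; simpl in Hs.
      * exists (inr x). split; [apply c_pos; unfold T1; simpl; eqv Ha|discriminate].
      * exists (inl z). split; [apply c_pos; unfold T1; simpl; eqv Ha|discriminate].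
    + intros [y|w] Hs; simpl in Hs.
      * exists (inr z). split; [eqv Ha|discriminate].
      * exists (inl x). split; [eqv Ha|discriminate].
    + simpl. exact Hxz.
Qed.

Lemma star_ii {X : Type} (b : prel X) (A : X -> Prop) z : in_PX b ->
  star (star (tr b) (eP A)) b (inl z) (inr z) ->
  exists w, b (inl w) (inr z) /\ forall y, b (inl w) (inl y) -> A y.
Proof.
  intros Hb [H|[Hs Hnp]]; [discriminate|].
  set (c := star (tr b) (eP A)) in *.
  destruct (proj2 Hb (inr z)) as [Hsing|[[w Hw] _]].
  { exfalso. apply Hnp. exists (inr z). right. split; [exact Hsing|apply sim_sym, Hs]. }
  assert (Hsw : sim c b (Lft z) (Mid w)).
  { apply sim_trans with (Rgt z); [exact Hs|].
    change (sim c b (emb_b (inr z)) (emb_b (inl w))). apply sim_b, Hw. }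
  assert (Hns : ~ singleton_block c (inr w)).
  { intro Hsg. apply Hnp. exists (inr w). left. split; [exact Hsg|apply sim_sym, Hsw]. }
  apply not_all_ex_not in Hns. destruct Hns as [v Hv].
  apply imply_to_and in Hv. destruct Hv as [[Heq|[Hs2 Hnp2]] Hne]; [congruence|].
  simpl in Hs2, Hnp2.
  assert (HAw : A w).
  { destruct (classic (A w)) as [|HA]; [assumption|exfalso].
    apply Hnp2. exists (inr w). right. split; [|apply rst_refl].
    intros v' [<-|[H1 H2]]; [reflexivity|contradiction]. }
  exists w. split; [apply (ps Hb), Hw|].
  intros y Hy. destruct (classic (A y)) as [|HA]; [assumption|exfalso].
  apply Hnp2. exists (inl y). right. split.
  - intros v' [<-|[H1 H2]]; [reflexivity|contradiction].
  - apply sim_trans with (Mid w).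
    + change (sim (tr b) (eP A) (emb_a (inr y)) (emb_a (inr w))). apply sim_a.
      unfold tr; simpl. apply (ps Hb), Hy.
    + change (sim (tr b) (eP A) (emb_b (inl w)) (emb_b (inr w))). apply sim_b.
      right. simpl. auto.
Qed.

Lemma circ_inv1 {X : Type} (a : prel X) : in_PX a -> circ (circ a (tr a)) a = a.
Proof.
  intro Ha. set (d := circ a (tr a)).
  assert (dneg : forall b0 x, d (inr b0) (inl x) -> a (inl b0) (inl x)).
  { intros b0 x [H|[b1 [_ [_ [_ H]]]]]; [discriminate|].
    cbv zeta in H. destruct H as [H1 H2]. unfold tr in H1; simpl in H1. eqv Ha. }
  assert (drr : forall b0 x, d (inr b0) (inr x) -> a (inl b0) (inl x)).
  { intros b0 x [H|[b1 [_ [_ [_ H]]]]]; [injection H as <-; apply (pr Ha)|].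
    cbv zeta in H. destruct H as [H1 H2]. unfold tr in H1, H2; simpl in H1, H2. eqv Ha. }
  assert (dpos : forall x0 z0 p q, a (inl x0) (inr z0) -> a (inl x0) (inl (base p)) ->
            a (inl x0) (inl (base q)) -> d p q).
  { intros x0 z0 p q Hxz Hp Hq. right. exists z0.
    split; [split; [exists x0|exists z0]; eqv Ha|].
    split; [split; [exists z0|exists x0]; unfold tr; simpl; eqv Ha|].
    split; [intro; unfold tr; simpl; tauto|].
    cbv zeta. destruct p, q; unfold tr; simpl in *; split; eqv Ha. }
  apply prel_ext. intros u v. split.
  - intros [<-|[b0 [_ [_ [_ H]]]]]; [apply (pr Ha)|].
    cbv zeta in H. destruct H as [H1 H2].
    assert (G : forall p, (match p with inl x => d (inr b0) (inl x) | inr x => a (inl b0) (inr x) end)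
               -> a (inl b0) p).
    { intros [x|x] Hp; [apply dneg; exact Hp|exact Hp]. }
    apply G in H1. apply G in H2. eqv Ha.
  - intro H. destruct (classic (u = v)) as [<-|Hne]; [left; reflexivity|right].
    destruct (line_of Ha H Hne) as [[x0 Hx0] [z0 Hz0]].
    assert (Hxz : a (inl x0) (inr z0)) by eqv Ha.
    exists x0.
    split; [split; [exists x0|exists x0]; [apply (dpos x0 z0)|left; reflexivity]; simpl; eqv Ha|].
    split; [split; [exists x0|exists z0]; eqv Ha|].
    split.
    { intro x. split; [apply drr|intro Hx; apply (dpos x0 z0); simpl; eqv Ha]. }
    cbv zeta.
    assert (G : forall p, a u p -> (match p with inl x => d (inr x0) (inl x) | inr x => a (inl x0) (inr x) end)).
    { intros [x|x] Hp; [apply (dpos x0 z0); simpl; eqv Ha|eqv Ha]. }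
    split; apply G; eqv Ha.
Qed.

Lemma circ_inv {X : Type} (a : prel X) : in_PX a -> inverse_in (@in_PX X) (@circ X) a (tr a).
Proof.
  intro Ha. pose proof (tr_PX a Ha) as Ht.
  split; [exact Ht|split].
  - apply circ_inv1; auto.
  - pose proof (circ_inv1 (tr a) Ht) as E. rewrite trtr in E. exact E.
Qed.

Lemma circ_idem {X : Type} (A : X -> Prop) : idempotent_in (@in_PX X) (@circ X) (eP A).
Proof.
  split; [apply eP_PX|]. apply prel_ext. intros u v. split.
  - intros [<-|[b0 [_ [_ [_ H]]]]]; [left; reflexivity|].
    cbv zeta in H. destruct H as [H1 H2]. right.
    destruct u, v; simpl in *; (destruct H1 as [H1|[_ H1]]; [discriminate|]);
      (destruct H2 as [H2|[_ H2]]; [discriminate|]); simpl in *; auto.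
  - intros [<-|[H1 H2]]; [left; reflexivity|right].
    exists (base u).
    split; [split; [exists (base u)|exists (base u)]; right; simpl; auto|].
    split; [split; [exists (base u)|exists (base u)]; right; simpl; auto|].
    split.
    { intro x. unfold eP; simpl. split; (intros [E|E]; [left; congruence|right; exact E]). }
    cbv zeta. destruct u, v; simpl in *; split; right; simpl; auto.
Qed.

Lemma circ_i {X : Type} (a : prel X) x z : in_PX a -> a (inl x) (inr z) ->
  circ (circ (tr a) (eP (fun y => a (inl x) (inl y)))) a (inl z) (inr z).
Proof.
  intros Ha Hxz.
  set (A := fun y => a (inl x) (inl y)).
  set (c := circ (tr a) (eP A)).
  assert (cpos : forall p, a (inl x) (swp p) -> c (inr x) p).
  { intros p Hp. right. exists x.
    split; [split; [exists z|exists x]; unfold tr; simpl; eqv Ha|].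
    split; [split; [exists x|exists x]; [left; reflexivity|right; unfold A; simpl; split; eqv Ha]|].
    split.
    { intro x'. unfold tr, eP, A; simpl. split.
      - intro H; right; split; eqv Ha.
      - intros [E|[_ E]]; [injection E as <-; apply (pr Ha)|exact E]. }
    cbv zeta. split.
    - right. unfold A; simpl; split; apply (pr Ha).
    - destruct p; unfold tr, eP, A in *; simpl in *; [exact Hp|right; split; [apply (pr Ha)|exact Hp]]. }
  right. exists x.
  split; [split; [exists z|exists x]; [apply cpos; exact Hxz|left; reflexivity]|].
  split; [split; [exists x|exists z]; eqv Ha|].
  split.
  { intro x'. split.
    - intros [E|[b1 [_ [_ [_ H]]]]]; [injection E as <-; apply (pr Ha)|].
      cbv zeta in H. destruct H as [_ H2]. destruct H2 as [H2|[_ H2]]; [discriminate|exact H2].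
    - intro H. apply cpos. exact H. }
  cbv zeta. split; [apply cpos; exact Hxz|exact Hxz].
Qed.

Lemma circ_ii {X : Type} (b : prel X) (A : X -> Prop) z : in_PX b ->
  circ (circ (tr b) (eP A)) b (inl z) (inr z) ->
  exists w, b (inl w) (inr z) /\ forall y, b (inl w) (inl y) -> A y.
Proof.
  intros Hb [H|[b0 [[[x Hx] _] [_ [Hiff H]]]]]; [discriminate|].
  cbv zeta in H. destruct H as [_ H2].
  exists b0. split; [exact H2|].
  assert (HA0 : A b0).
  { destruct Hx as [E|[b1 [_ [_ [_ H]]]]]; [discriminate|].
    cbv zeta in H. destruct H as [H1 _]. destruct H1 as [E|[_ E]]; [discriminate|exact E]. }
  intros y Hy. apply Hiff in Hy.
  destruct Hy as [E|[b1 [_ [_ [_ H]]]]]; [injection E as <-; exact HA0|].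
  cbv zeta in H. destruct H as [_ H3]. destruct H3 as [E|[_ E]]; [discriminate|exact E].
Qed.

Definition keyP {X : Type} (op : prel X -> prel X -> prel X) :=
  forall a b, in_PX a -> in_PX b -> mu_rel (@in_PX X) op a b ->
  forall x z, a (inl x) (inr z) ->
  exists w, b (inl w) (inr z) /\ forall y, b (inl w) (inl y) -> a (inl x) (inl y).

Lemma mu_sym {X : Type} (op : prel X -> prel X -> prel X) a b :
  mu_rel (@in_PX X) op a b -> mu_rel (@in_PX X) op b a.
Proof. intros H e He a' b' Ha Hb. symmetry. apply H; auto. Qed.

Lemma fund_of_key {X : Type} (op : prel X -> prel X -> prel X) :
  keyP op -> fundamental (@in_PX X) op.
Proof.
  intros K.
  assert (cross : forall a b, in_PX a -> in_PX b -> mu_rel (@in_PX X) op a b ->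
            forall x z, a (inl x) (inr z) -> b (inl x) (inr z)).
  { intros a0 b0 Ha0 Hb0 Hm0 x z H.
    destruct (K _ _ Ha0 Hb0 Hm0 _ _ H) as [w [Hw Hd]].
    destruct (K _ _ Hb0 Ha0 (mu_sym _ _ _ Hm0) _ _ Hw) as [w' [Hw' Hd']].
    assert (a0 (inl w') (inl x)) as H1 by eqv Ha0.
    apply Hd' in H1. eqv Hb0. }
  assert (inc : forall a b, in_PX a -> in_PX b -> mu_rel (@in_PX X) op a b ->
            forall u v, a u v -> b u v).
  { intros a0 b0 Ha0 Hb0 Hm0 u v H.
    destruct (classic (u = v)) as [<-|Hne]; [apply (pr Hb0)|].
    destruct (line_of Ha0 H Hne) as [[x0 Hx0] [z0 Hz0]].
    assert (Hxz : a0 (inl x0) (inr z0)) by eqv Ha0.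
    assert (L : forall p, a0 (inl x0) p -> b0 (inl x0) p).
    { intros [y|y] Hp.
      - assert (b0 (inl y) (inr z0)) by (apply (cross a0); auto; eqv Ha0).
        assert (b0 (inl x0) (inr z0)) by (apply (cross a0); auto).
        eqv Hb0.
      - apply (cross a0); auto. }
    assert (b0 (inl x0) u) by (apply L; eqv Ha0).
    assert (b0 (inl x0) v) by (apply L; eqv Ha0).
    eqv Hb0. }
  intros a b Ha Hb Hm. apply prel_ext. intros u v. split.
  - apply inc; auto.
  - apply inc; auto. apply mu_sym; auto.
Qed.

Theorem mainTheorem3 (X : Type) (hX : exists x y : X, x <> y) :
  fundamental (@in_PX X) (@star X) /\ fundamental (@in_PX X) (@circ X).
Proof.
  split; apply fund_of_key; intros a b Ha Hb Hm x z H.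
  - pose proof (Hm _ (star_idem (fun y => a (inl x) (inl y))) _ _ (star_inv a Ha) (star_inv b Hb)) as E.
    pose proof (star_i a x z Ha H) as Hi. rewrite E in Hi.
    exact (star_ii b _ z Hb Hi).
  - pose proof (Hm _ (circ_idem (fun y => a (inl x) (inl y))) _ _ (circ_inv a Ha) (circ_inv b Hb)) as E.
    pose proof (circ_i a x z Ha H) as Hi. rewrite E in Hi.
    exact (circ_ii b _ z Hb Hi).
Qed.
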